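(* Let $r>0$, $R_0>r$, $V_T>0$ and $\Delta V>0$, and put $V_s=\frac{2\pi R_0V_T}{r}+V_T+\Delta V$. Define a sequence by $R_0$ (the given initial radius) and $$R_{i+1}=R_i-\frac{r(V_s-V_T)-2\pi R_iV_T}{V_s+V_T}\quad(i\ge 0),$$ and put $T_{in_i}=\frac{r(V_s-V_T)-2\pi R_iV_T}{V_s(V_s+V_T)}$. Let $N=\min\{n\ge 0: R_n\le r\}$. Define $$T_{in}=\sum_{i=0}^{N-2}T_{in_i}+\frac{R_N}{V_s},\qquad T_{circular}=\sum_{i=0}^{N-1}\frac{2\pi R_i}{V_s}+\frac{2\pi r}{V_s},$$ and $T=T_{circular}+T_{in}$. Then $$N=\left\lceil\frac{\ln\left(\frac{2\pi rV_T-r(V_s-V_T)}{2\pi R_0V_T-r(V_s-V_T)}\right)}{\ln\left(1+\frac{2\pi V_T}{V_s+V_T}\right)}\right\rceil,$$ $$T_{in}=\frac{R_0}{V_s}+\left(1+\frac{2\pi V_T}{V_s+V_T}\right)^{N-1}\frac{2\pi R_0V_T-r(V_s-V_T)}{V_s(V_s+V_T)},$$ and $$T_{circular}=-\frac{R_0(V_s+V_T)}{V_sV_T}+\frac{r(V_s-V_T)(V_s+V_T+2\pi V_TN)}{2\pi V_sV_T^2}+\left(1+\frac{2\pi V_T}{V_s+V_T}\right)^{N}\frac{2\pi R_0V_T-r(V_s-V_T)}{V_sV_T}\cdot\frac{V_s+V_T}{2\pi V_T}+\frac{2\pi r}{V_s}.$$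
   Context: This models a circular sweep process. Evaders, with maximal speed $V_T$, start in a disk of radius $R_0$. A line formation with sensor length $2r$, moving at speed $V_s=V_c+\Delta V$ with critical speed $V_c=2\pi R_0V_T/r+V_T$, repeatedly circles the evader region and then steps inward. $R_i$ is the radius of the circle bounding the evader region after $i$ sweeps. $T_{in_i}$ is the duration of the $i$-th inward advancement. $N$ is the number of iterations needed to reduce the evader region to a disk of radius at most $r$. $T_{in}$ is the total inward-advancement time, which includes a final inward move of duration $R_N/V_s$. $T_{circular}$ is the total time of the circular traversals, which includes a final circular sweep of radius $r$. *)

(* Defs.v *)
From HB Require Import structures.
From mathcomp Require Import all_boot all_order all_algebra.
From mathcomp Require Import all_classical all_reals all_analysis.
Set Implicit Arguments. Unset Strict Implicit. Unset Printing Implicit Defensive.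
Import Order.TTheory GRing.Theory Num.Theory.
Local Open Scope ring_scope.

Definition sweep_Vs {R : realType} (r R0 VT dV : R) : R :=
  2 * pi * R0 * VT / r + VT + dV.

Fixpoint sweep_R {R : realType} (r R0 VT Vs : R) (i : nat) : R :=
  match i with
  | 0 => R0
  | i'.+1 => let Ri := sweep_R r R0 VT Vs i' in
             Ri - (r * (Vs - VT) - 2 * pi * Ri * VT) / (Vs + VT)
  end.

Definition sweep_Tin_i {R : realType} (r R0 VT Vs : R) (i : nat) : R :=
  (r * (Vs - VT) - 2 * pi * sweep_R r R0 VT Vs i * VT) / (Vs * (Vs + VT)).

Definition is_min_index {R : realType} (r R0 VT Vs : R) (N : nat) : Prop :=
  sweep_R r R0 VT Vs N <= r /\ (forall n : nat, (n < N)%N -> r < sweep_R r R0 VT Vs n).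

(* T_in = sum_{i=0}^{N-2} T_in_i + R_N / Vs (empty sum when N <= 1). *)
Definition sweep_Tin {R : realType} (r R0 VT Vs : R) (N : nat) : R :=
  \sum_(0 <= i < N.-1) sweep_Tin_i r R0 VT Vs i + sweep_R r R0 VT Vs N / Vs.

Definition sweep_Tcirc {R : realType} (r R0 VT Vs : R) (N : nat) : R :=
  \sum_(0 <= i < N) (2 * pi * sweep_R r R0 VT Vs i / Vs) + 2 * pi * r / Vs.

(* Main.v *)
Require Import Defs.
From HB Require Import structures.
From mathcomp Require Import all_boot all_order all_algebra.
From mathcomp Require Import all_classical all_reals all_analysis.
From mathcomp Require Import lra ring.
Import Order.TTheory GRing.Theory Num.Theory.
Local Open Scope ring_scope.

Section Aux.
Variables (R : realType) (r R0 VT Vs : R).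
Hypotheses (hVT : 0 < VT) (hVs : 0 < Vs).
Let q := 1 + 2 * pi * VT / (Vs + VT).
Let Rs := r * (Vs - VT) / (2 * pi * VT).
Let D := Rs - R0.

Lemma aux_ne : [/\ Vs + VT != 0, VT != 0, pi != 0 :> R, Vs != 0 & q - 1 != 0].
Proof.
have hp := @pi_gt0 R.

have h1 : 0 < Vs + VT by rewrite addr_gt0.
have hq : 0 < q - 1 by rewrite /q addrAC subrr add0r divr_gt0 // !mulr_gt0.
split; rewrite gt_eqF //.
Qed.

Lemma closedR n : sweep_R r R0 VT Vs n = Rs - q ^+ n * D.
Proof.
have [h1 h2 h3 h4 h5] := aux_ne.
elim: n => [|n IH] /=; first by rewrite expr0 mul1r /D; ring.
rewrite IH exprS /q /Rs /D; move: h3; generalize (@pi R) => P h3; field.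
by rewrite h1 h2 h3.
Qed.

Lemma sumTin n : \sum_(0 <= i < n) sweep_Tin_i r R0 VT Vs i = (R0 - sweep_R r R0 VT Vs n) / Vs.
Proof.
have [h1 h2 h3 h4 h5] := aux_ne.
elim: n => [|n IH]; first by rewrite big_geq // subrr mul0r.
rewrite big_nat_recr //= IH /sweep_Tin_i; move: h3; generalize (@pi R) => P h3; field.
by rewrite h4 h1.
Qed.

Lemma sumCirc n : \sum_(0 <= i < n) (2 * pi * sweep_R r R0 VT Vs i / Vs)
  = 2 * pi / Vs * (n%:R * Rs - D * (q ^+ n - 1) / (q - 1)).
Proof.
have [h1 h2 h3 h4 h5] := aux_ne.
elim: n => [|n IH]; first by rewrite big_geq // expr0 subrr mul0r mulr0 mul0r subrr mulr0.
rewrite big_nat_recr //= IH closedR exprS -addn1 natrD; rewrite /q /Rs /D; move: h3 h5; rewrite /q; generalize (@pi R) => P h3 h5; field.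
have -> : Vs + VT + 2 * P * VT + -1 * (Vs + VT) = 2 * P * VT by ring.
by rewrite h1 h2 h3 h4 !mulf_neq0 // pnatr_eq0.
Qed.

End Aux.

Lemma bern (R : realType) (x : R) n : 0 <= x -> 1 + n%:R * x <= (1 + x) ^+ n.
Proof.
move=> hx; elim: n => [|n IH]; first by rewrite expr0 mul0r addr0.
have h0 : 0 <= (1 + x) ^+ n by rewrite exprn_ge0 // addr_ge0.
rewrite exprS -addn1 natrD.
have h1 : (1 + n%:R * x) * (1 + x) <= (1 + x) * (1 + x) ^+ n.
  by rewrite mulrC ler_wpM2l // addr_ge0.
have h2 : 0 <= n%:R * x * x by rewrite !mulr_ge0.
apply: le_trans h1; nra.
Qed.

Theorem theorem6 (R : realType) (r R0 VT dV : R)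
  (hr : 0 < r) (hR0 : r < R0) (hVT : 0 < VT) (hdV : 0 < dV) :
  let Vs := sweep_Vs r R0 VT dV in
  let q := 1 + 2 * pi * VT / (Vs + VT) in
  (exists n : nat, sweep_R r R0 VT Vs n <= r) /\
  forall N : nat, is_min_index r R0 VT Vs N ->
    [/\ (N%:Z = Num.ceil
           (ln ((2 * pi * r * VT - r * (Vs - VT)) / (2 * pi * R0 * VT - r * (Vs - VT)))
            / ln q)),
        sweep_Tin r R0 VT Vs N =
          R0 / Vs + q ^+ N.-1 * ((2 * pi * R0 * VT - r * (Vs - VT)) / (Vs * (Vs + VT)))
      & sweep_Tcirc r R0 VT Vs N =
          - (R0 * (Vs + VT) / (Vs * VT))
          + r * (Vs - VT) * (Vs + VT + 2 * pi * VT * N%:R) / (2 * pi * Vs * VT ^+ 2)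
          + q ^+ N * ((2 * pi * R0 * VT - r * (Vs - VT)) / (Vs * VT))
              * ((Vs + VT) / (2 * pi * VT))
          + 2 * pi * r / Vs].
Proof.
move=> Vs q.
have hp := @pi_gt0 R.
have hVsVT : Vs - VT = 2 * pi * R0 * VT / r + dV.
  by rewrite /Vs /sweep_Vs; ring.
have hA : 0 < 2 * pi * R0 * VT / r.
  by rewrite divr_gt0 // !mulr_gt0 //; apply: lt_trans hR0.
have hVs : 0 < Vs.
  have -> : Vs = (Vs - VT) + VT by rewrite subrK.
  by rewrite hVsVT !addr_gt0.
have hVsVT0 : 0 < Vs + VT by rewrite addr_gt0.
clearbody Vs.
have hcl := @closedR R r R0 VT Vs hVT hVs.
set Rs := r * (Vs - VT) / (2 * pi * VT).
set D := Rs - R0.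
have hpVT : 0 < 2 * pi * VT by rewrite !mulr_gt0.
have eD : D = r * dV / (2 * pi * VT).
  rewrite /D /Rs hVsVT mulrDr.
  move: hp hr; generalize (@pi R) => P hp hr'; field.
  by rewrite (gt_eqF hVT) (gt_eqF hp) (gt_eqF hr').
have hDp : 0 < D by rewrite eD divr_gt0 // mulr_gt0.
have ha : 0 < q - 1 by rewrite /q addrAC subrr add0r divr_gt0.
have hq0 : 0 < q by rewrite /q addr_gt0 // divr_gt0.
have hRsr : 0 < Rs - r.
  by apply: (lt_trans hDp); rewrite /D ltrD2l ltrN2.
split.
  pose x := (Rs - r) / ((q - 1) * D).
  have hx : 0 <= x by rewrite /x ltW // divr_gt0 // mulr_gt0.
  exists (Num.bound x); rewrite hcl -/Rs -/D -/q.
  have hb := archi_boundP hx.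
  have hbe := @bern R (q - 1) (Num.bound x) (ltW ha).
  rewrite addrCA subrr addr0 in hbe.
  rewrite /x ltr_pdivrMr ?mulr_gt0 // in hb.
  set B := (Num.bound x)%:R in hb hbe *.
  set Q := q ^+ _ in hbe *.
  nra.
move=> N [hN hlt].
have hN0 : (0 < N)%N.
  case: N hN hlt => // hN _; move: hN => /=; rewrite leNgt hR0 //.
case: N hN0 hN hlt => // M _ hN hlt.
have hM := hlt M (ltnSn M).
rewrite hcl -/Rs -/D -/q in hN.
rewrite hcl -/Rs -/D -/q in hM.
set rho := (Rs - r) / D.
have hrhoN : rho <= q ^+ M.+1 by rewrite /rho ler_pdivrMr //; lra.
have hrhoM : q ^+ M < rho by rewrite /rho ltr_pdivlMr //; lra.
have hrho0 : 0 < rho by rewrite divr_gt0.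
have erho : (2 * pi * r * VT - r * (Vs - VT)) / (2 * pi * R0 * VT - r * (Vs - VT)) = rho.
  have e1 : 2 * pi * r * VT - r * (Vs - VT) = - (2 * pi * VT) * (Rs - r).
    rewrite /Rs; move: hp; generalize (@pi R) => P hp'; field.
    by rewrite (gt_eqF hVT) (gt_eqF hp').
  have e2 : 2 * pi * R0 * VT - r * (Vs - VT) = - (2 * pi * VT) * D.
    rewrite /D /Rs; move: hp; generalize (@pi R) => P hp'; field.
    by rewrite (gt_eqF hVT) (gt_eqF hp').
  rewrite e1 e2 /rho !mulNr invrN mulrN opprK -mulf_div divff ?mul1r //.
  by rewrite gt_eqF.
have hq1 : 1 < q by rewrite -subr_gt0.
have hlq : 0 < ln q by apply: ln_gt0.
split.
- rewrite erho; apply/esym/ceil_def.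
  have -> : (M.+1%:Z - 1 = M%:Z) by rewrite -addn1 PoszD addrK.
  rewrite -!pmulrn; apply/andP; split.
    by rewrite ltr_pdivlMr // mulr_natl -lnXn // ltr_ln ?posrE ?exprn_gt0.
  by rewrite ler_pdivrMr // mulr_natl -lnXn // ler_ln ?posrE ?exprn_gt0.
- rewrite /sweep_Tin /= sumTin // !hcl -/Rs -/D -/q.
  move: (q ^+ M) => t; rewrite /D /Rs.
  move: hp; generalize (@pi R) => P hp'; field.
  by rewrite (gt_eqF hVT) (gt_eqF hp') (gt_eqF hVs) (gt_eqF hVsVT0).
- rewrite /sweep_Tcirc sumCirc // -/Rs -/D -/q.
  have hq1' : q - 1 != 0 by rewrite gt_eqF.
  move: (q ^+ M.+1) => t; rewrite /D /Rs /q.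
  move: hp hq1'; rewrite /q; generalize (@pi R) => P hp' hq'; field.
  have -> : Vs + VT + 2 * P * VT + -1 * (Vs + VT) = 2 * P * VT by ring.
  by rewrite (gt_eqF hVT) (gt_eqF hp') (gt_eqF hVs) (gt_eqF hVsVT0) /= gt_eqF // !mulr_gt0.
Qed.
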